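(* Let $p \geq 5$ and $g \geq 2$ be integers such that $F = \frac{8(g-1)}{p-4}$ is a positive integer not divisible by $4$. Then: (1) a lattice $\Gamma_{p,3,g}$ does not exist; and (2) there is no tessellation $Y$ of the closed orientable genus $g$ surface $S_g$ by $F$ copies of a regular right-angled hyperbolic $p$-gon such that, for every odd integer $v \geq 3$, there is a uniform lattice $\Gamma_{p,v,g}$ in $\mathrm{Aut}(I_{p,v})$ with $\Gamma_{p,v,g} \backslash I_{p,v} \cong Y$.
   Context: For $p \geq 5$ and $v \geq 2$, Bourdon's building $I_{p,v}$ is the unique simply connected polygonal $2$-complex whose $2$-cells are regular right-angled hyperbolic $p$-gons and whose vertex links are the complete bipartite graph $K_{v,v}$. $\mathrm{Aut}(I_{p,v})$ is its group of cellular isometries with the compact-open topology. A uniform lattice is a subgroup acting cocompactly with finite cell stabilizers. ''A lattice $\Gamma_{p,v,g}$ exists'' means there is a uniform lattice $\Gamma < \mathrm{Aut}(I_{p,v})$ with $\Gamma \backslash I_{p,v}$ isometric to a compact orientable genus $g$ surface tiled by regular right-angled hyperbolic $p$-gons. $\cong$ denotes isomorphism of polygonal complexes. *)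

(* Defs.v *)
From Stdlib Require Import Arith List Relations.
Import ListNotations.

Set Implicit Arguments.

(* A polygonal 2-complex all of whose 2-cells are p-gons.
   - cV : vertices; cD : darts (oriented edges); cF : 2-cells.
   - dinv : reversal of a dart (fixed-point free involution); an (unoriented)
     edge is a pair {d, dinv d}.
   - bd f : nat -> cD  : the boundary cycle of the face f (period p), read
     from some base corner in some direction. *)
Record cx (p : nat) := Cx {
  cV : Type; cD : Type; cF : Type;
  src : cD -> cV;
  dinv : cD -> cD;
  dinv_inv : forall d, dinv (dinv d) = d;
  dinv_nofix : forall d, dinv d <> d;
  bd : cF -> nat -> cD;
  bd_per : forall f i, bd f (i + p) = bd f i;
  bd_chain : forall f i, src (dinv (bd f i)) = src (bd f (S i))
}.

Arguments cV {p}. Arguments cD {p}. Arguments cF {p}.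
Arguments src {p X} _ : rename. Arguments dinv {p X} _ : rename.
Arguments bd {p X} _ _ : rename.

Definition tgt {p} {X : cx p} (d : cD X) : cV X := src (dinv d).

(* Cellular maps: vertices, darts, faces, compatible with incidence; a face
   is sent onto a face, its boundary cycle being matched up to a rotation
   and/or a reversal (dihedral reparametrisation). *)
Definition is_morph {p} (X Y : cx p) (fV : cV X -> cV Y) (fD : cD X -> cD Y)
    (fF : cF X -> cF Y) : Prop :=
  (forall d, fV (src d) = src (fD d)) /\
  (forall d, fD (dinv d) = dinv (fD d)) /\
  (forall f, exists k,
      (forall i, bd (fF f) i = fD (bd f (k + i))) \/
      (forall i, bd (fF f) i = dinv (fD (bd f (k + (p - 1) * i))))).

Definition bij_on {T U : Type} (A : T -> Prop) (B : U -> Prop) (h : T -> U) : Prop :=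
  (forall x, A x -> B (h x)) /\
  (forall x y, A x -> A y -> h x = h y -> x = y) /\
  (forall b, B b -> exists x, A x /\ h x = b).

(* Link of a vertex x: its vertices are the darts starting at x, its edges
   are the corners (f, i) (i < p) of faces at x; the corner (f,i) joins the
   darts dinv (bd f (i-1)) and bd f i.  [link_iso X x HV HE ends] says this
   (multi)graph is isomorphic to the graph with vertex set HV, edge set HE and
   endpoint map ends. *)
Definition link_iso {p} (X : cx p) (x : cV X) {U W : Type}
    (HV : U -> Prop) (HE : W -> Prop) (ends : W -> U * U) : Prop :=
  exists (alpha : cD X -> U) (beta : cF X * nat -> W),
    bij_on (fun d => src d = x) HV alpha /\
    bij_on (fun c => snd c < p /\ src (bd (fst c) (snd c)) = x) HE beta /\
    (forall f i, i < p -> src (bd f i) = x ->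
       let e1 := alpha (dinv (bd f (i + p - 1))) in
       let e2 := alpha (bd f i) in
       let (u1, u2) := ends (beta (f, i)) in
       (e1 = u1 /\ e2 = u2) \/ (e1 = u2 /\ e2 = u1)).

Definition Kvv_V (v : nat) (u : bool * nat) : Prop := snd u < v.
Definition Kvv_E (v : nat) (w : nat * nat) : Prop := fst w < v /\ snd w < v.
Definition Kvv_ends (w : nat * nat) : (bool * nat) * (bool * nat) :=
  ((false, fst w), (true, snd w)).

Definition C4_V (j : nat) : Prop := j < 4.
Definition C4_E (j : nat) : Prop := j < 4.
Definition C4_ends (j : nat) : nat * nat := (j, (S j) mod 4).

Definition adj {p} (X : cx p) (x y : cV X) : Prop :=
  exists d, src d = x /\ tgt d = y.
Definition connected {p} (X : cx p) : Prop :=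
  forall x y : cV X, clos_refl_trans _ (adj X) x y.

Fixpoint is_path {p} {X : cx p} (x : cV X) (l : list (cD X)) : Prop :=
  match l with
  | [] => True
  | d :: l' => src d = x /\ is_path (tgt d) l'
  end.
Definition endv {p} {X : cx p} (x : cV X) (l : list (cD X)) : cV X :=
  fold_left (fun _ d => tgt d) l x.

Definition face_loop {p} {X : cx p} (f : cF X) (k : nat) : list (cD X) :=
  map (fun i => bd f (k + i)) (seq 0 p).

Definition htpy_step {p} {X : cx p} (x : cV X) (l l' : list (cD X)) : Prop :=
  exists l1 l2 loop,
    l = l1 ++ l2 /\ l' = l1 ++ loop ++ l2 /\
    ((exists d, src d = endv x l1 /\ loop = [d; dinv d]) \/
     (exists f k, src (bd f k) = endv x l1 /\ loop = face_loop f k)).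

Definition simply_connected {p} (X : cx p) : Prop :=
  connected X /\
  forall (x : cV X) (l : list (cD X)), is_path x l -> endv x l = x ->
    clos_refl_sym_trans _ (htpy_step x) l [].

(* Bourdon's building I_{p,v}: simply connected, all vertex links K_{v,v}
   (unique up to isomorphism, by Bourdon). *)
Definition bourdon (p v : nat) (X : cx p) : Prop :=
  simply_connected X /\
  forall x : cV X, link_iso X x (Kvv_V v) (Kvv_E v) Kvv_ends.
Arguments bourdon : clear implicits.

(* A subgroup of Aut(X): an abstract group acting faithfully on X by
   cellular automorphisms. *)
Record action {p} (X : cx p) := Action {
  G : Type;
  gmul : G -> G -> G;
  ginv : G -> G;
  gone : G;
  gmulA : forall a b c, gmul a (gmul b c) = gmul (gmul a b) c;
  gmul1 : forall a, gmul gone a = a;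
  gmulV : forall a, gmul (ginv a) a = gone;
  aV : G -> cV X -> cV X;
  aD : G -> cD X -> cD X;
  aF : G -> cF X -> cF X;
  a_morph : forall g, is_morph X X (aV g) (aD g) (aF g);
  aV1 : forall x, aV gone x = x;
  aD1 : forall d, aD gone d = d;
  aF1 : forall f, aF gone f = f;
  aVM : forall g h x, aV (gmul g h) x = aV g (aV h x);
  aDM : forall g h d, aD (gmul g h) d = aD g (aD h d);
  aFM : forall g h f, aF (gmul g h) f = aF g (aF h f);
  a_faithful : forall g, (forall x, aV g x = x) -> (forall d, aD g d = d) ->
                 (forall f, aF g f = f) -> g = gone
}.

Arguments G {p X} _ : rename.
Arguments aV {p X} _ _ _ : rename.
Arguments aD {p X} _ _ _ : rename.
Arguments aF {p X} _ _ _ : rename.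

Definition finite_pred {T : Type} (P : T -> Prop) : Prop :=
  exists l : list T, forall t, P t -> In t l.

(* uniform lattice: cocompact (finitely many orbits of cells) with finite
   cell stabilisers *)
Definition uniform_lattice {p} {X : cx p} (Ga : action X) : Prop :=
  (exists l : list (cV X), forall x, exists g y, In y l /\ aV Ga g y = x) /\
  (exists l : list (cD X), forall d, exists g e, In e l /\ aD Ga g e = d) /\
  (exists l : list (cF X), forall f, exists g h, In h l /\ aF Ga g h = f) /\
  (forall x, finite_pred (fun g => aV Ga g x = x)) /\
  (forall d, finite_pred (fun g => aD Ga g d = d \/ aD Ga g d = dinv d)) /\
  (forall f, finite_pred (fun g => aF Ga g f = f)).

(* Ga \ X is isomorphic (as a polygonal complex) to Y: a cellular map
   X -> Y, onto on each kind of cell, whose fibres are exactly the orbits *)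
Definition quotient_iso {p} {X : cx p} (Ga : action X) (Y : cx p) : Prop :=
  exists (pV : cV X -> cV Y) (pD : cD X -> cD Y) (pF : cF X -> cF Y),
    is_morph X Y pV pD pF /\
    (forall y, exists x, pV x = y) /\
    (forall e, exists d, pD d = e) /\
    (forall h, exists f, pF f = h) /\
    (forall x x', pV x = pV x' <-> exists g, aV Ga g x = x') /\
    (forall d d', pD d = pD d' <-> exists g, aD Ga g d = d') /\
    (forall f f', pF f = pF f' <-> exists g, aF Ga g f = f').

Definition fin_card (T : Type) (n : nat) : Prop :=
  exists l : list T, NoDup l /\ (forall t, In t l) /\ length l = n.

Definition orientable {p} (Y : cx p) : Prop :=
  exists eps : cF Y -> bool,
    let od f i := if eps f then bd f i else dinv (bd f i) in
    forall d, exists f i, i < p /\ od f i = d /\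
      forall f' i', i' < p -> od f' i' = d -> f' = f /\ i' = i.

(* Y is a tessellation of the closed orientable surface of genus g by nF
   regular right-angled hyperbolic p-gons: connected, every vertex link a
   4-cycle (surface, four right angles at each vertex), orientable, finite,
   Euler characteristic V - E + F = 2 - 2g (with E = #darts / 2). *)
Definition tessellation (p g nF : nat) (Y : cx p) : Prop :=
  connected Y /\
  (forall y : cV Y, link_iso Y y C4_V C4_E C4_ends) /\
  orientable Y /\
  fin_card (cF Y) nF /\
  exists nV nD, fin_card (cV Y) nV /\ fin_card (cD Y) nD /\
    2 * nV + 2 * nF + 4 * g = nD + 4.
Arguments tessellation : clear implicits.

Definition lattice_exists (p v g : nat) : Prop :=
  exists X : cx p, bourdon p v X /\
  exists Ga : action X, uniform_lattice Ga /\
  exists Y : cx p, (exists nF, tessellation p g nF Y) /\ quotient_iso Ga Y.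

(* Main.v *)
Require Import Defs.
From Stdlib Require Import Arith Lia List Bool Classical ClassicalEpsilon.
Import ListNotations.

Definition modeq (p a b : nat) : Prop := exists x y, a + x*p = b + y*p.

Lemma modeq_refl p a : modeq p a a.
Proof. exists 0, 0. lia. Qed.
Lemma modeq_sym p a b : modeq p a b -> modeq p b a.
Proof. intros [x [y H]]. exists y, x. lia. Qed.
Lemma modeq_trans p a b c : modeq p a b -> modeq p b c -> modeq p a c.
Proof. intros [x [y H]] [x' [y' H']]. exists (x+x'), (y+y'). nia. Qed.
Lemma modeq_add p a b c d : modeq p a b -> modeq p c d -> modeq p (a+c) (b+d).
Proof. intros [x [y H]] [x' [y' H']]. exists (x+x'), (y+y'). nia. Qed.
Lemma modeq_mul p a b c : modeq p a b -> modeq p (c*a) (c*b).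
Proof. intros [x [y H]]. exists (c*x), (c*y). nia. Qed.
Lemma modeq_addp p a q : modeq p (a + q*p) a.
Proof. exists 0, q. lia. Qed.
Lemma modeq_cancel p a b c : modeq p (c+a) (c+b) -> modeq p a b.
Proof. intros [x [y H]]. exists x, y. lia. Qed.
Lemma modeq_small p a b : a < p -> b < p -> modeq p a b -> a = b.
Proof. intros Ha Hb [x [y H]].
  destruct (Nat.lt_trichotomy x y) as [Hl|[He|Hl]].
  - assert (y*p >= (x+1)*p) by (apply Nat.mul_le_mono_r; lia). nia.
  - subst. lia.
  - assert (x*p >= (y+1)*p) by (apply Nat.mul_le_mono_r; lia). nia.
Qed.
Lemma modeq_reduce p n : 0 < p -> exists r, r < p /\ modeq p n r.
Proof. intros Hp. exists (n mod p). split. apply Nat.mod_upper_bound; lia.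
  exists 0, (n / p). rewrite (Nat.div_mod n p) at 1 by lia. lia. Qed.
Lemma modeq_sq p n : 0 < p -> modeq p ((p-1)*((p-1)*n)) n.
Proof. intros Hp. destruct p as [|q]; [lia|]. replace (S q - 1) with q by lia.
  exists n, (q*n). nia. Qed.

Definition ueq {T} (a b : T * T) : Prop :=
  (fst a = fst b /\ snd a = snd b) \/ (fst a = snd b /\ snd a = fst b).
Definition pmap {T U} (h : T -> U) (a : T * T) : U * U := (h (fst a), h (snd a)).
Definition swap {T} (a : T * T) : T * T := (snd a, fst a).

Lemma ueq_sym {T} (a b : T*T) : ueq a b -> ueq b a.
Proof. unfold ueq; intuition. Qed.
Lemma ueq_trans {T} (a b c : T*T) : ueq a b -> ueq b c -> ueq a c.
Proof. unfold ueq; intros [[]|[]] [[]|[]]; [left|right|right|left]; split; congruence. Qed.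
Lemma ueq_refl {T} (a : T*T) : ueq a a.
Proof. left; auto. Qed.
Lemma ueq_swap {T} (a : T*T) : ueq a (swap a).
Proof. right; auto. Qed.
Lemma ueq_pmap {T U} (h : T -> U) a b : ueq a b -> ueq (pmap h a) (pmap h b).
Proof. unfold ueq, pmap; simpl; intros [[]|[]]; [left|right]; split; congruence. Qed.

Definition cp {p} {X : cx p} (f : cF X) (i : nat) : cD X * cD X :=
  (dinv (bd f (i + p - 1)), bd f i).

Lemma bd_addq {p} (X : cx p) (f : cF X) i q : bd f (i + q*p) = bd f i.
Proof. induction q; simpl. rewrite Nat.add_0_r; auto.
  replace (i + (p + q*p)) with ((i + q*p) + p) by lia. rewrite bd_per; auto. Qed.

Lemma bd_cong {p} (X : cx p) (f : cF X) a b : modeq p a b -> bd f a = bd f b.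
Proof. intros [x [y H]]. rewrite <- (bd_addq X f a x), <- (bd_addq X f b y), H. auto. Qed.

Lemma cp_cong {p} (X : cx p) (f : cF X) a b : modeq p a b -> cp f a = cp f b.
Proof. intros H. unfold cp. rewrite (bd_cong X f a b H).
  rewrite (bd_cong X f (a+p-1) (b+p-1)); auto.
  destruct H as [x [y H]]. exists x, y. nia. Qed.

Lemma cp_src1 {p} (X : cx p) (f : cF X) i : 0 < p -> src (fst (cp f i)) = src (bd f i).
Proof. intros Hp. unfold cp; simpl. rewrite bd_chain.
  replace (S (i + p - 1)) with (i + p) by lia. rewrite bd_per. auto. Qed.

Definition Rk (p : nat) (s : bool) (k i j : nat) : Prop :=
  if s then modeq p (k + j) i else modeq p (k + (p-1)*j + 1) i.

Lemma morph_corner {p} (X Y : cx p) fV fD fF : 1 < p -> is_morph X Y fV fD fF ->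
  forall f, exists s k, forall i j, Rk p s k i j ->
    cp (fF f) j = (if s then pmap fD (cp f i) else swap (pmap fD (cp f i))).
Proof.
  intros Hp [HV [HD HF]] f. destruct (HF f) as [k [H|H]].
  - exists true, k. intros i j Hr. simpl in Hr. unfold cp, pmap; simpl.
    rewrite !H, HD. rewrite (bd_cong X f (k+j) i Hr).
    rewrite (bd_cong X f (k + (j+p-1)) (i+p-1)); auto.
    destruct Hr as [x [y Hr]]. exists x, y. lia.
  - exists false, k. intros i j Hr. simpl in Hr. unfold cp, pmap, swap; simpl.
    rewrite !H, HD, !dinv_inv. destruct p as [|q]; [lia|].
    replace (S q - 1) with q in * by lia.
    destruct Hr as [x [y Hr]].
    rewrite (bd_cong X f (k + q * (j + S q - 1)) i).
    rewrite (bd_cong X f (k + q*j) (i + S q - 1)); auto.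
    + replace (i + S q - 1) with (i + q) by lia. exists (x+1), y. nia.
    + replace (j + S q - 1) with (j + q) by lia. exists x, (y + q - 1).
      destruct q; [lia|]. replace (S q + y - 1) with (q + y) by lia. nia.
Qed.

Lemma Rk_ex_j p s k i : 0 < p -> exists j, j < p /\ Rk p s k i j.
Proof. intros Hp. destruct s; simpl.
  - destruct (modeq_reduce p (i + p*k - k) Hp) as [j [Hj Hm]]. exists j; split; auto.
    destruct Hm as [x [y H]]. exists y, (x + k). nia.
  - destruct (modeq_reduce p ((p-1)*(i + (p-1)*(k+1))) Hp) as [j [Hj Hm]].
    exists j; split; auto.
    assert (H1 : modeq p ((p-1)*j) (i + (p-1)*(k+1))).
    { eapply modeq_trans. apply modeq_sym. apply modeq_mul. exact Hm. apply modeq_sq; auto. }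
    assert (H2 : modeq p (k + (p-1)*j + 1) (i + (k+1)*p)).
    { replace (k + (p-1)*j + 1) with ((p-1)*j + (k+1)) by lia.
      replace (i + (k+1)*p) with ((i + (p-1)*(k+1)) + (k+1)) by nia.
      apply modeq_add; auto. apply modeq_refl. }
    eapply modeq_trans; [exact H2|]. apply modeq_addp.
Qed.

Lemma Rk_ex_i p s k j : 0 < p -> exists i, i < p /\ Rk p s k i j.
Proof. intros Hp. destruct s; simpl.
  - destruct (modeq_reduce p (k + j) Hp) as [i [Hi Hm]]. exists i; auto.
  - destruct (modeq_reduce p (k + (p-1)*j + 1) Hp) as [i [Hi Hm]]. exists i; auto.
Qed.

Lemma Rk_inj_i p s k i i' j : Rk p s k i j -> Rk p s k i' j -> modeq p i i'.
Proof. destruct s; simpl; intros H1 H2; eapply modeq_trans; [apply modeq_sym; exact H1|exact H2|apply modeq_sym; exact H1|exact H2]. Qed.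

Lemma Rk_inj_j p s k i j j' : 0 < p -> Rk p s k i j -> Rk p s k i j' -> modeq p j j'.
Proof. intros Hp. destruct s; simpl; intros H1 H2.
  - apply (modeq_cancel p j j' k). eapply modeq_trans; [exact H1| apply modeq_sym; exact H2].
  - assert (H3 : modeq p ((p-1)*j) ((p-1)*j')).
    { apply (modeq_cancel _ _ _ k). replace (k + (p-1)*j) with (k + (p-1)*j) by lia.
      destruct (modeq_trans _ _ _ _ H1 (modeq_sym _ _ _ H2)) as [x [y H]].
      exists x, y. lia. }
    eapply modeq_trans; [apply modeq_sym; apply (modeq_sq p j Hp)|].
    eapply modeq_trans; [apply modeq_mul; exact H3|]. apply modeq_sq; auto.
Qed.

Lemma link_ends {p} (X : cx p) (x : cV X) {U W : Type} (HV : U -> Prop) (HE : W -> Prop)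
  (ends : W -> U * U) (alpha : cD X -> U) (beta : cF X * nat -> W) :
  (forall f i, i < p -> src (bd f i) = x ->
       let e1 := alpha (dinv (bd f (i + p - 1))) in
       let e2 := alpha (bd f i) in
       let (u1, u2) := ends (beta (f, i)) in
       (e1 = u1 /\ e2 = u2) \/ (e1 = u2 /\ e2 = u1)) ->
  forall f i, i < p -> src (bd f i) = x -> ueq (pmap alpha (cp f i)) (ends (beta (f,i))).
Proof. intros H f i Hi Hs. specialize (H f i Hi Hs). simpl in H.
  destruct (ends (beta (f,i))) as [u1 u2]. unfold ueq, pmap, cp; simpl. exact H. Qed.

Lemma C4_ends_inj e e' : e < 4 -> e' < 4 -> ueq (C4_ends e) (C4_ends e') -> e = e'.
Proof. intros He He' H. unfold C4_ends, ueq in H; simpl in H.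
  destruct e as [|[|[|[|e]]]]; destruct e' as [|[|[|[|e']]]]; simpl in H; lia. Qed.

Lemma Kvv_ends_inj e e' : ueq (Kvv_ends e) (Kvv_ends e') -> e = e'.
Proof. destruct e as [a b], e' as [a' b']. unfold Kvv_ends, ueq; simpl.
  intros [[H1 H2]|[H1 H2]]; [injection H1; injection H2; intros; subst; auto|discriminate]. Qed.

Lemma ueq_inj {T U} (h : T -> U) a b : (forall x y, h x = h y -> x = y) ->
  ueq (pmap h a) (pmap h b) -> ueq a b.
Proof. intros Hi. unfold ueq, pmap; simpl. intros [[]|[]]; [left|right]; split; auto. Qed.

Lemma corner_eq_gen {p} (X : cx p) (x : cV X) {U W : Type} (HV : U -> Prop) (HE : W -> Prop)
  (ends : W -> U * U) :
  0 < p ->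
  (forall e e', HE e -> HE e' -> ueq (ends e) (ends e') -> e = e') ->
  link_iso X x HV HE ends ->
  forall f f' i i', i < p -> i' < p -> src (bd f i) = x ->
  ueq (cp f i) (cp f' i') -> f = f' /\ i = i'.
Proof.
  intros Hp Hinj [alpha [beta [Ha [Hb He]]]] f f' i i' Hi Hi' Hs Hu.
  assert (Hs' : src (bd f' i') = x).
  { rewrite <- Hs. destruct Hu as [[H1 H2]|[H1 H2]]; simpl in *.
    - rewrite <- H2; auto.
    - rewrite <- H1. apply (cp_src1 X f i Hp). }
  pose proof (link_ends X x HV HE ends alpha beta He f i Hi Hs) as E1.
  pose proof (link_ends X x HV HE ends alpha beta He f' i' Hi' Hs') as E2.
  destruct Hb as [Hb1 [Hb2 _]].
  assert (beta (f,i) = beta (f',i')).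
  { apply Hinj; [apply Hb1; simpl; auto|apply Hb1; simpl; auto|].
    eapply ueq_trans; [apply ueq_sym; exact E1|]. eapply ueq_trans; [|exact E2].
    apply ueq_pmap; auto. }
  assert (Heq : (f,i) = (f',i')) by (apply Hb2; simpl; auto).
  injection Heq; auto.
Qed.

Lemma Ycorner_eq {p} (Y : cx p) : 0 < p ->
  (forall y : cV Y, link_iso Y y C4_V C4_E C4_ends) ->
  forall (h h' : cF Y) j j', j < p -> j' < p -> ueq (cp h j) (cp h' j') -> h = h' /\ j = j'.
Proof. intros Hp HY h h' j j' Hj Hj' Hu.
  eapply (corner_eq_gen Y (src (bd h j)) C4_V C4_E C4_ends Hp); eauto.
  intros e e' He He' Hu'. apply C4_ends_inj; auto. Qed.

Lemma Xcorner_eq {p} (X : cx p) v (x : cV X) : 0 < p ->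
  link_iso X x (Kvv_V v) (Kvv_E v) Kvv_ends ->
  forall f f' i i', i < p -> i' < p -> src (bd f i) = x ->
  ueq (cp f i) (cp f' i') -> f = f' /\ i = i'.
Proof. intros Hp HX. eapply (corner_eq_gen X x _ _ Kvv_ends Hp); eauto.
  intros; apply Kvv_ends_inj; auto. Qed.

Lemma morph_ueq {p} (X Y : cx p) (fV : cV X -> cV Y) (fD : cD X -> cD Y) (fF : cF X -> cF Y) f s k (H : forall i j, Rk p s k i j ->
    cp (fF f) j = (if s then pmap fD (cp f i) else swap (pmap fD (cp f i)))) :
  forall i j, Rk p s k i j -> ueq (cp (fF f) j) (pmap fD (cp f i)).
Proof. intros i j Hr. rewrite (H i j Hr). destruct s; [apply ueq_refl|apply ueq_sym, ueq_swap]. Qed.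

Section Quot.
Variable p : nat.
Hypothesis Hp5 : 5 <= p.
Variables X Y : cx p.
Variable Ga : action X.
Variables (pV : cV X -> cV Y) (pD : cD X -> cD Y) (pF : cF X -> cF Y).
Hypothesis HY : forall y : cV Y, link_iso Y y C4_V C4_E C4_ends.
Hypothesis Hm : is_morph X Y pV pD pF.
Hypothesis HiV : forall x x', pV x = pV x' <-> exists g, aV Ga g x = x'.
Hypothesis HiD : forall d d', pD d = pD d' <-> exists g, aD Ga g d = d'.
Hypothesis HiF : forall f f', pF f = pF f' <-> exists g, aF Ga g f = f'.

Lemma Hp0 : 0 < p. Proof. lia. Qed.
Lemma Hp1 : 1 < p. Proof. lia. Qed.

Lemma pD_inv g d : pD (aD Ga g d) = pD d.
Proof. symmetry. apply HiD. eauto. Qed.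
Lemma pV_inv g x : pV (aV Ga g x) = pV x.
Proof. symmetry. apply HiV. eauto. Qed.
Lemma pF_inv g f : pF (aF Ga g f) = pF f.
Proof. symmetry. apply HiF. eauto. Qed.

Lemma pD_corner_inj f i i' :
  ueq (pmap pD (cp f i)) (pmap pD (cp f i')) -> modeq p i i'.
Proof.
  intros Hu. destruct (morph_corner X Y pV pD pF Hp1 Hm f) as [s [k H]].
  pose proof (morph_ueq X Y pV pD pF f s k H) as H'.
  destruct (Rk_ex_j p s k i Hp0) as [j [Hj Hr]].
  destruct (Rk_ex_j p s k i' Hp0) as [j' [Hj' Hr']].
  assert (ueq (cp (pF f) j) (cp (pF f) j')).
  { eapply ueq_trans; [apply H'; exact Hr|]. eapply ueq_trans; [exact Hu|].
    apply ueq_sym, H'; auto. }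
  destruct (Ycorner_eq Y Hp0 HY _ _ _ _ Hj Hj' H0) as [_ ->].
  eapply Rk_inj_i; eauto.
Qed.

Lemma pmap_pD_inv g a : pmap pD (pmap (aD Ga g) a) = pmap pD a.
Proof. unfold pmap; simpl. rewrite !pD_inv. auto. Qed.

Lemma stab_fix g f : aF Ga g f = f -> forall i, aD Ga g (bd f i) = bd f i.
Proof.
  intros Hg. destruct (morph_corner X X _ _ _ Hp1 (a_morph Ga g) f) as [s [k H]].
  pose proof (morph_ueq X X (aV Ga g) (aD Ga g) (aF Ga g) f s k H) as H'. rewrite Hg in H, H'.
  assert (Hc : forall i j, Rk p s k i j -> modeq p j i).
  { intros i j Hr. apply (pD_corner_inj f). rewrite <- (pmap_pD_inv g (cp f i)).
    apply ueq_pmap. apply H'; auto. }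
  destruct s.
  - intros i. destruct (Rk_ex_j p true k i Hp0) as [j [Hj Hr]].
    pose proof (H i j Hr) as E. unfold cp, pmap in E. simpl in E.
    injection E; intros E2 _. rewrite <- E2. apply bd_cong. apply Hc; auto.
  - exfalso.
    destruct (Rk_ex_j p false k 0 Hp0) as [j0 [Hj0 Hr0]].
    destruct (Rk_ex_j p false k 1 Hp0) as [j1 [Hj1 Hr1]].
    pose proof (Hc _ _ Hr0) as M0. pose proof (Hc _ _ Hr1) as M1. simpl in Hr0, Hr1.
    assert (A0 : modeq p (k + (p-1)*j0 + 1) (k + (p-1)*0 + 1)).
    { apply modeq_add; [apply modeq_add; [apply modeq_refl|apply modeq_mul; auto]|apply modeq_refl]. }
    assert (A1 : modeq p (k + (p-1)*j1 + 1) (k + (p-1)*1 + 1)).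
    { apply modeq_add; [apply modeq_add; [apply modeq_refl|apply modeq_mul; auto]|apply modeq_refl]. }
    assert (B0 : modeq p (k+1) 0).
    { replace (k+1) with (k + (p-1)*0 + 1) by lia. eapply modeq_trans; [apply modeq_sym, A0|auto]. }
    assert (B1 : modeq p (k + 1*p) 1).
    { replace (k + 1*p) with (k + (p-1)*1 + 1) by lia. eapply modeq_trans; [apply modeq_sym, A1|auto]. }
    assert (B3 : modeq p k 1) by (eapply modeq_trans; [apply modeq_sym, (modeq_addp p k 1)|exact B1]).
    assert (B4 : modeq p (1+1) 0).
    { eapply modeq_trans; [|exact B0]. apply modeq_add; [apply modeq_sym; exact B3|apply modeq_refl]. }
    apply modeq_small in B4; lia.
Qed.

Lemma stab_fix_cp g f i : aF Ga g f = f -> pmap (aD Ga g) (cp f i) = cp f i.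
Proof. intros Hg. unfold pmap, cp; simpl. destruct (a_morph Ga g) as [_ [HD _]].
  rewrite HD, !(stab_fix g f Hg). auto. Qed.

Lemma stab_face_vertex g f i : aF Ga g f = f -> aV Ga g (src (bd f i)) = src (bd f i).
Proof. intros Hg. destruct (a_morph Ga g) as [HV _]. rewrite HV, stab_fix; auto. Qed.

End Quot.

Definition cardP {T} (P : T -> Prop) (n : nat) : Prop :=
  exists l, NoDup l /\ (forall t, P t <-> In t l) /\ length l = n.

Lemma cardP_unique {T} (P : T -> Prop) n m : cardP P n -> cardP P m -> n = m.
Proof. intros [l [Hl [Hi Hn]]] [l' [Hl' [Hi' Hm]]]. subst.
  apply Nat.le_antisymm; apply NoDup_incl_length; auto; intros t Ht;
  [apply Hi', Hi|apply Hi, Hi']; auto. Qed.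

Lemma cardP_exists {T} (P : T -> Prop) : finite_pred P -> exists n, cardP P n.
Proof. intros [l Hl].
  assert (Hr : exists r, NoDup r /\ forall t, In t r <-> (In t l /\ P t)).
  { clear Hl. induction l as [|a l IH].
    - exists []. split; [constructor|]. simpl; tauto.
    - destruct IH as [r [Hr Hi]].
      destruct (classic (P a /\ ~ In a r)) as [[Ha Hn]|Hn].
      + exists (a :: r). split; [constructor; auto|]. intros t; simpl; rewrite Hi.
        split; [intros [<-|[]]; auto|]. intros [[<-|H1] H2]; auto.
      + exists r. split; auto. intros t; simpl; rewrite Hi. split; [tauto|].
        intros [[<-|H1] H2]; auto. apply NNPP; intros Hc. apply Hn; split; auto.
        intros Hc'. apply Hc. apply Hi in Hc'. tauto. }
  destruct Hr as [r [Hr Hi]]. exists (length r), r. repeat split; auto.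
  - intros Ht. apply Hi; split; auto.
  - intros Ht; apply Hi; auto.
Qed.

Lemma cardP_pos {T} (P : T -> Prop) n t : cardP P n -> P t -> 0 < n.
Proof. intros [l [_ [Hi Hn]]] Ht. apply Hi in Ht. destruct l; simpl in *; [tauto|lia]. Qed.

Lemma NoDup_map_inj {A B} (f : A -> B) l : (forall x y, In x l -> In y l -> f x = f y -> x = y) ->
  NoDup l -> NoDup (map f l).
Proof. induction l as [|a l IH]; simpl; intros Hi Hn; constructor.
  - inversion Hn; subst. intros Hc. apply in_map_iff in Hc. destruct Hc as [y [Hy Hy']].
    assert (y = a) by (apply Hi; auto). subst; auto.
  - inversion Hn; subst. apply IH; auto. Qed.

Lemma length_flat_map_const {A B C} (F : A -> B -> C) (l : list B) (O : list A) :
  length (flat_map (fun x => map (F x) l) O) = length O * length l.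
Proof. induction O; simpl; auto. rewrite length_app, length_map, IHO. lia. Qed.

Section Grp.
Context {p : nat} {X : cx p} (Ga : action X).
Notation mul := (gmul Ga). Notation inv := (ginv Ga). Notation one := (gone Ga).

Lemma gmul_inv_r a : mul a (inv a) = one.
Proof.
  transitivity (mul (mul (inv (inv a)) (inv a)) (mul a (inv a))).
  { rewrite gmulV, gmul1. auto. }
  rewrite <- gmulA. rewrite (gmulA Ga (inv a) a (inv a)). rewrite gmulV, gmul1. apply gmulV.
Qed.

Lemma gmul_1r a : mul a one = a.
Proof. rewrite <- (gmulV Ga a), gmulA, gmul_inv_r, gmul1. auto. Qed.

Lemma gmul_cancel a x y : mul a x = mul a y -> x = y.
Proof. intros H. rewrite <- (gmul1 Ga x), <- (gmul1 Ga y), <- (gmulV Ga a), <- !gmulA, H. auto. Qed.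

Lemma aD_inv g d : aD Ga (inv g) (aD Ga g d) = d.
Proof. rewrite <- aDM, gmulV, aD1. auto. Qed.
Lemma aD_inv' g d : aD Ga g (aD Ga (inv g) d) = d.
Proof. rewrite <- aDM, gmul_inv_r, aD1. auto. Qed.
Lemma aV_inv g d : aV Ga (inv g) (aV Ga g d) = d.
Proof. rewrite <- aVM, gmulV, aV1. auto. Qed.
Lemma aF_inv g d : aF Ga (inv g) (aF Ga g d) = d.
Proof. rewrite <- aFM, gmulV, aF1. auto. Qed.

Lemma orbit_stab (S Hs : G Ga -> Prop) {E} (act : G Ga -> E -> E -> Prop) (e : E)
  (O : list E) n m :
  NoDup O ->
  (forall g e1 e2, S g -> act g e e1 -> act g e e2 -> e1 = e2) ->
  (forall g, S g -> exists e', In e' O /\ act g e e') ->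
  (forall e', In e' O -> exists g, S g /\ act g e e') ->
  (forall g h, S g -> S h -> S (mul g h)) ->
  (forall g e' h, S g -> act g e e' -> Hs h -> act (mul g h) e e') ->
  (forall g g' e', S g -> S g' -> act g e e' -> act g' e e' -> Hs (mul (inv g') g)) ->
  (forall h, Hs h -> S h) ->
  cardP S n -> cardP Hs m -> n = length O * m.
Proof.
  intros HO Hfun Hto Hfrom Hmul Hact Hstab Hsub HS [lH [HlH [HiH HmH]]].
  assert (Hsel : forall e', exists g, In e' O -> S g /\ act g e e').
  { intros e'. destruct (classic (In e' O)) as [Hin|Hn].
    - destruct (Hfrom e' Hin) as [g Hg]. exists g; auto.
    - exists one; tauto. }
  set (gsel := fun e' => proj1_sig (constructive_indefinite_description _ (Hsel e'))).
  assert (Hgs : forall e', In e' O -> S (gsel e') /\ act (gsel e') e e').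
  { intros e' Hin. unfold gsel. destruct (constructive_indefinite_description _ (Hsel e')); simpl; auto. }
  set (LL := flat_map (fun e' => map (mul (gsel e')) lH) O).
  assert (Hlen : length LL = length O * m).
  { unfold LL. rewrite length_flat_map_const. congruence. }
  assert (Hin : forall g, S g <-> In g LL).
  { intros g. unfold LL. rewrite in_flat_map. split.
    - intros Hg. destruct (Hto g Hg) as [e' [He' Ha]]. exists e'. split; auto.
      apply in_map_iff. exists (mul (inv (gsel e')) g). split.
      + rewrite gmulA, gmul_inv_r, gmul1; auto.
      + apply HiH. destruct (Hgs e' He'). eapply Hstab; eauto.
    - intros [e' [He' Hm]]. apply in_map_iff in Hm. destruct Hm as [h [<- Hh]].
      apply Hmul; [apply Hgs; auto|apply Hsub, HiH; auto]. }
  assert (Hnd : forall O', incl O' O -> NoDup O' ->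
      NoDup (flat_map (fun e' => map (mul (gsel e')) lH) O')).
  { intros O'. induction O' as [|a O' IH]; intros Hinc HO'; simpl; [constructor|].
    inversion HO'; subst. apply NoDup_app.
    - apply NoDup_map_inj; auto. intros x y _ _ Hxy. eapply gmul_cancel; eauto.
    - apply IH; auto. intros z Hz; apply Hinc; simpl; auto.
    - assert (Ha : In a O) by (apply Hinc; simpl; auto).
      intros g Hg1 Hg2. apply in_map_iff in Hg1. destruct Hg1 as [h [<- Hh]].
      apply in_flat_map in Hg2. destruct Hg2 as [e2 [He2 Hg2]].
      assert (He2' : In e2 O) by (apply Hinc; simpl; auto).
      apply in_map_iff in Hg2. destruct Hg2 as [h2 [E2 Hh2]].
      assert (A1 : act (mul (gsel a) h) e a).
      { apply Hact; [apply Hgs; auto|apply Hgs; auto|apply HiH; auto]. }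
      assert (A2 : act (mul (gsel e2) h2) e e2).
      { apply Hact; [apply Hgs; auto|apply Hgs; auto|apply HiH; auto]. }
      rewrite E2 in A2. assert (a = e2).
      { eapply Hfun; [|exact A1|exact A2]. apply Hmul; [apply Hgs; auto|apply Hsub, HiH; auto]. }
      subst; auto. }
  eapply cardP_unique; [exact HS|]. exists LL. repeat split; auto.
  apply Hnd; auto. intros z; auto.
  all: try (intros; apply Hin; auto).
Qed.

Lemma gmul_cancel_r a x y : mul x a = mul y a -> x = y.
Proof. intros H. rewrite <- (gmul_1r x), <- (gmul_1r y), <- (gmul_inv_r a), !gmulA, H. auto. Qed.

Lemma conj_card f0 f g0 n : cardP (fun g => aF Ga g f0 = f0) n -> aF Ga g0 f0 = f ->
  cardP (fun g => aF Ga g f = f) n.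
Proof.
  intros [l [Hl [Hi Hn]]] Hg0.
  exists (map (fun k => mul g0 (mul k (inv g0))) l). split; [|split].
  - apply NoDup_map_inj; auto. intros a b _ _ H. apply gmul_cancel in H. apply gmul_cancel_r in H. auto.
  - intros t. rewrite in_map_iff. split.
    + intros Ht. exists (mul (inv g0) (mul t g0)). split.
      * rewrite !gmulA, gmul_inv_r, gmul1, <- gmulA, gmul_inv_r, gmul_1r. auto.
      * apply Hi. rewrite !aFM, Hg0, Ht, <- Hg0, aF_inv. auto.
    + intros [k [<- Hk]]. apply Hi in Hk. rewrite !aFM, <- Hg0. rewrite aF_inv, Hk. auto.
  - rewrite length_map; auto.
Qed.

End Grp.

Lemma nodup_same_len {T} (l1 l2 : list T) : NoDup l1 -> NoDup l2 ->
  (forall z, In z l1 <-> In z l2) -> length l1 = length l2.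
Proof. intros H1 H2 Hi. apply Nat.le_antisymm; apply NoDup_incl_length; auto; intros z Hz; apply Hi; auto. Qed.

Lemma NoDup_flat_map_gen {A B} (F : A -> list B) (l : list A) :
  NoDup l -> (forall a, In a l -> NoDup (F a)) ->
  (forall a b z, In a l -> In b l -> In z (F a) -> In z (F b) -> a = b) ->
  NoDup (flat_map F l).
Proof. induction l as [|a l IH]; simpl; intros Hn Hf Hd; [constructor|].
  inversion Hn; subst. apply NoDup_app; [apply Hf; simpl; auto| |].
  { apply IH; auto. intros a' b' z A1 A2 Z1 Z2. apply (Hd a' b' z); simpl; auto. }
  intros z Hz Hz'. apply in_flat_map in Hz'. destruct Hz' as [b [Hb Hzb]].
  assert (a = b) by (apply (Hd a b z); simpl; auto). subst; contradiction. Qed.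

Lemma len_filter_flat_map {A B} (P : B -> bool) (F : A -> list B) l :
  length (filter P (flat_map F l)) = list_sum (map (fun a => length (filter P (F a))) l).
Proof. induction l; simpl; auto. rewrite filter_app, length_app, IHl. auto. Qed.

Lemma list_sum_map_add {A} (f g : A -> nat) l :
  list_sum (map (fun a => f a + g a) l) = list_sum (map f l) + list_sum (map g l).
Proof. induction l; simpl; auto. rewrite IHl. lia. Qed.

Lemma list_sum_map_mul {A} (c : nat) (f : A -> nat) l :
  list_sum (map (fun a => c * f a) l) = c * list_sum (map f l).
Proof. induction l; simpl; auto. rewrite IHl. lia. Qed.

Lemma list_sum_map_ext {A} (f g : A -> nat) l : (forall a, In a l -> f a = g a) ->
  list_sum (map f l) = list_sum (map g l).
Proof. induction l; simpl; intros H; [auto|]. rewrite (H a), IHl; auto. Qed.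

Lemma list_sum_const {A} (c : nat) (l : list A) : list_sum (map (fun _ => c) l) = c * length l.
Proof. induction l; simpl; auto. rewrite IHl. lia. Qed.

Lemma list_sum_exchange {A B} (f : A -> B -> nat) la lb :
  list_sum (map (fun a => list_sum (map (fun b => f a b) lb)) la) =
  list_sum (map (fun b => list_sum (map (fun a => f a b) la)) lb).
Proof. induction la as [|a la IH]; simpl.
  - rewrite (list_sum_const 0 lb). lia.
  - rewrite IH. rewrite <- list_sum_map_add. reflexivity. Qed.


Lemma list_sum_divide p {A} (f : A -> nat) l : (forall a, In a l -> Nat.divide p (f a)) ->
  Nat.divide p (list_sum (map f l)).
Proof. induction l; simpl; intros H. apply Nat.divide_0_r.
  apply Nat.divide_add_r; auto. Qed.

Definition match4 (u v c : nat) : bool :=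
  ((u =? c) && (v =? S c mod 4)) || ((u =? S c mod 4) && (v =? c)).
Definition E9 : list (nat * nat) := list_prod (seq 0 3) (seq 0 3).
Definition ocnt (qa qb : nat -> nat) (c : nat) : nat :=
  length (filter (fun ab => match4 (qa (fst ab)) (qb (snd ab)) c) E9).
Definition vcnt (qa qb : nat -> nat) (v : nat) : nat :=
  length (filter (fun c => ocnt qa qb c =? v) (seq 0 4)).
Definition hypb (qa qb : nat -> nat) : bool :=
  forallb (fun ab => existsb (fun c => match4 (qa (fst ab)) (qb (snd ab)) c) (seq 0 4)) E9 &&
  forallb (fun t => existsb (fun a => qa a =? t) (seq 0 3) || existsb (fun b => qb b =? t) (seq 0 3)) (seq 0 4).
Definition conclb (qa qb : nat -> nat) : bool :=
  (vcnt qa qb 1 =? 1) && (vcnt qa qb 2 =? 2) && (vcnt qa qb 4 =? 1) &&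
  forallb (fun c => (ocnt qa qb c =? 1) || (ocnt qa qb c =? 2) || (ocnt qa qb c =? 4)) (seq 0 4).
Definition checkf qa qb := implb (hypb qa qb) (conclb qa qb).
Definition fn3 (a0 a1 a2 : nat) (a : nat) : nat := nth a [a0; a1; a2] 0.
Definition check6 a0 a1 a2 b0 b1 b2 := checkf (fn3 a0 a1 a2) (fn3 b0 b1 b2).
Definition vals := [0;1;2;3].
Definition all_ok : bool :=
  forallb (fun a0 => forallb (fun a1 => forallb (fun a2 =>
  forallb (fun b0 => forallb (fun b1 => forallb (fun b2 =>
    check6 a0 a1 a2 b0 b1 b2) vals) vals) vals) vals) vals) vals.
Lemma all_ok_true : all_ok = true.
Proof. vm_compute. reflexivity. Qed.

Lemma checkf_eq qa qb : checkf qa qb = check6 (qa 0) (qa 1) (qa 2) (qb 0) (qb 1) (qb 2).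
Proof. reflexivity. Qed.

Lemma check6_ok a0 a1 a2 b0 b1 b2 : a0 < 4 -> a1 < 4 -> a2 < 4 -> b0 < 4 -> b1 < 4 -> b2 < 4 ->
  check6 a0 a1 a2 b0 b1 b2 = true.
Proof.
  intros H0 H1 H2 H3 H4 H5. pose proof all_ok_true as H. unfold all_ok in H.
  assert (Hv : forall x, x < 4 -> In x vals) by (intros x Hx; unfold vals; simpl; lia).
  rewrite forallb_forall in H; specialize (H a0 (Hv _ H0)).
  rewrite forallb_forall in H; specialize (H a1 (Hv _ H1)).
  rewrite forallb_forall in H; specialize (H a2 (Hv _ H2)).
  rewrite forallb_forall in H; specialize (H b0 (Hv _ H3)).
  rewrite forallb_forall in H; specialize (H b1 (Hv _ H4)).
  rewrite forallb_forall in H; specialize (H b2 (Hv _ H5)). exact H.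
Qed.

Lemma len_filter4 (f : nat -> bool) :
  length (filter f (seq 0 4)) = Nat.b2n (f 0) + Nat.b2n (f 1) + Nat.b2n (f 2) + Nat.b2n (f 3).
Proof. simpl. destruct (f 0), (f 1), (f 2), (f 3); simpl; lia. Qed.

Lemma sum4 (o : nat -> nat) (N m : nat) :
  (forall c, c < 4 -> o c = 1 \/ o c = 2 \/ o c = 4) ->
  length (filter (fun c => o c =? 1) (seq 0 4)) = 1 ->
  length (filter (fun c => o c =? 2) (seq 0 4)) = 2 ->
  length (filter (fun c => o c =? 4) (seq 0 4)) = 1 ->
  length (filter (fun c => N =? o c * m) (seq 0 4)) =
    Nat.b2n (N =? m) + 2 * Nat.b2n (N =? 2 * m) + Nat.b2n (N =? 4 * m).
Proof.
  intros Ho H1 H2 H4. rewrite len_filter4 in *.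
  destruct (Ho 0 ltac:(lia)) as [E0|[E0|E0]]; destruct (Ho 1 ltac:(lia)) as [E1|[E1|E1]];
  destruct (Ho 2 ltac:(lia)) as [E2|[E2|E2]]; destruct (Ho 3 ltac:(lia)) as [E3|[E3|E3]];
  rewrite ?E0, ?E1, ?E2, ?E3 in *; simpl in H1, H2, H4; try lia;
  rewrite ?Nat.mul_1_l; lia.
Qed.

Lemma local_comb (qa qb : nat -> nat) :
  (forall a b, a < 3 -> b < 3 -> exists c, c < 4 /\ match4 (qa a) (qb b) c = true) ->
  (forall t, t < 4 -> (exists a, a < 3 /\ qa a = t) \/ (exists b, b < 3 /\ qb b = t)) ->
  vcnt qa qb 1 = 1 /\ vcnt qa qb 2 = 2 /\ vcnt qa qb 4 = 1 /\
  (forall c, c < 4 -> ocnt qa qb c = 1 \/ ocnt qa qb c = 2 \/ ocnt qa qb c = 4).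
Proof.
  intros Hadj Hcov.
  assert (Hm4 : forall u v c, c < 4 -> match4 u v c = true -> u < 4 /\ v < 4).
  { intros u v c Hc Hm. unfold match4 in Hm.
    apply orb_true_iff in Hm; destruct Hm as [Hm|Hm]; apply andb_true_iff in Hm;
    destruct Hm as [Hu Hv]; apply Nat.eqb_eq in Hu, Hv; subst;
    pose proof (Nat.mod_upper_bound (S c) 4 ltac:(lia)); lia. }
  assert (Ha : forall a, a < 3 -> qa a < 4).
  { intros a H. destruct (Hadj a 0 H ltac:(lia)) as [c [Hc Hm]]. apply (Hm4 _ _ _ Hc Hm). }
  assert (Hb : forall b, b < 3 -> qb b < 4).
  { intros b H. destruct (Hadj 0 b ltac:(lia) H) as [c [Hc Hm]]. apply (Hm4 _ _ _ Hc Hm). }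
  assert (Hh : hypb qa qb = true).
  { unfold hypb. apply andb_true_iff; split.
    - apply forallb_forall. intros [a b] Hab. unfold E9 in Hab. apply in_prod_iff in Hab.
      destruct Hab as [Ha' Hb']. apply in_seq in Ha', Hb'.
      destruct (Hadj a b ltac:(lia) ltac:(lia)) as [c [Hc Hm]].
      apply existsb_exists. exists c. split; auto. apply in_seq; lia.
    - apply forallb_forall. intros t Ht. apply in_seq in Ht.
      destruct (Hcov t ltac:(lia)) as [[a [Ha' E]]|[b [Hb' E]]]; apply orb_true_iff;
      [left|right]; apply existsb_exists; [exists a|exists b]; split;
      try (apply in_seq; lia); apply Nat.eqb_eq; auto. }
  pose proof (check6_ok _ _ _ _ _ _ (Ha 0 ltac:(lia)) (Ha 1 ltac:(lia)) (Ha 2 ltac:(lia))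
     (Hb 0 ltac:(lia)) (Hb 1 ltac:(lia)) (Hb 2 ltac:(lia))) as Hc.
  rewrite <- checkf_eq in Hc. unfold checkf in Hc. rewrite Hh in Hc. simpl in Hc.
  unfold conclb in Hc. apply andb_true_iff in Hc. destruct Hc as [Hc Hall].
  apply andb_true_iff in Hc. destruct Hc as [Hc H4].
  apply andb_true_iff in Hc. destruct Hc as [H1 H2].
  apply Nat.eqb_eq in H1, H2, H4. repeat split; auto.
  intros c Hcl. rewrite forallb_forall in Hall. specialize (Hall c ltac:(apply in_seq; lia)).
  apply orb_true_iff in Hall. destruct Hall as [Hall|Hall]; [apply orb_true_iff in Hall; destruct Hall as [Hall|Hall]|];
  apply Nat.eqb_eq in Hall; auto.
Qed.

Definition Vm {T} (N : T -> nat) (l : list T) (k : nat) : nat :=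
  list_sum (map (fun y => Nat.b2n (N y =? k)) l).

Lemma sum_b2n_seq n B : 1 <= n -> n <= B -> list_sum (map (fun k => Nat.b2n (n =? k)) (seq 1 B)) = 1.
Proof.
  intros H1 H2. revert n H1 H2. induction B as [|B IH]; intros n H1 H2; [lia|].
  rewrite seq_S, map_app, list_sum_app. simpl.
  destruct (Nat.eq_dec n (S B)) as [E|E].
  - subst. rewrite (list_sum_map_ext _ (fun _ => 0)).
    + rewrite list_sum_const. rewrite Nat.eqb_refl. simpl. lia.
    + intros a Ha. apply in_seq in Ha. destruct (Nat.eqb_spec (S B) a); [lia|auto].
  - rewrite IH by lia. rewrite (proj2 (Nat.eqb_neq n (S B)) E). simpl. lia.
Qed.

Lemma Vm_zero {T} (N : T -> nat) l k : (forall y, In y l -> N y < k) -> Vm N l k = 0.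
Proof. intros H. unfold Vm. rewrite (list_sum_map_ext _ (fun _ => 0)). rewrite list_sum_const. lia.
  intros a Ha. specialize (H a Ha). destruct (Nat.eqb_spec (N a) k); [lia|auto]. Qed.

Lemma nt_div {T} p (l : list T) (N : T -> nat) (Nf : nat -> nat) : 0 < p ->
  (forall y, In y l -> 1 <= N y) ->
  (forall k, 1 <= k -> p * Nf k = Vm N l k + 2 * Vm N l (2*k) + Vm N l (4*k)) ->
  Nat.divide p (length l).
Proof.
  intros Hp H1 Heq.
  set (B := list_sum (map N l)).
  assert (HB : forall y, In y l -> N y <= B).
  { unfold B. clear. induction l as [|a l IH]; simpl; intros y Hy; [tauto|].
    destruct Hy as [<-|Hy]; [lia|]. specialize (IH y Hy). lia. }
  assert (Hd : forall d k, 1 <= k -> B < k + d -> Nat.divide p (Vm N l k)).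
  { induction d as [|d IH]; intros k Hk Hkd.
    - rewrite Vm_zero; [apply Nat.divide_0_r|]. intros y Hy. specialize (HB y Hy). lia.
    - assert (A2 : Nat.divide p (Vm N l (2*k))) by (apply IH; lia).
      assert (A4 : Nat.divide p (Vm N l (4*k))) by (apply IH; lia).
      apply (Nat.divide_add_cancel_r _ (2 * Vm N l (2*k) + Vm N l (4*k))).
      + apply Nat.divide_add_r; [apply Nat.divide_mul_r|]; auto.
      + replace (2 * Vm N l (2 * k) + Vm N l (4 * k) + Vm N l k) with (p * Nf k) by (rewrite Heq; lia).
        apply Nat.divide_factor_l. }
  assert (Hlen : length l = list_sum (map (fun k => Vm N l k) (seq 1 B))).
  { unfold Vm. rewrite list_sum_exchange.
    rewrite (list_sum_map_ext _ (fun _ => 1)). rewrite list_sum_const. lia.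
    intros y Hy. apply sum_b2n_seq; auto. }
  rewrite Hlen. apply list_sum_divide. intros k Hk. apply in_seq in Hk. apply (Hd (S B)); lia.
Qed.

Lemma match4_ueq u v c : match4 u v c = true <-> ueq (u,v) (C4_ends c).
Proof. unfold match4, ueq, C4_ends; simpl. rewrite orb_true_iff, !andb_true_iff, !Nat.eqb_eq. tauto. Qed.

Lemma E9_NoDup : NoDup E9.
Proof. unfold E9. simpl. repeat constructor; simpl; intros H; repeat destruct H as [H|H]; try discriminate; auto. Qed.

Lemma in_E9 a b : In (a,b) E9 <-> a < 3 /\ b < 3.
Proof. unfold E9. rewrite in_prod_iff, !in_seq. lia. Qed.

Section Local.
Variable p : nat.
Hypothesis Hp5 : 5 <= p.
Variables X Y : cx p.
Variable Ga : action X.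
Variables (pV : cV X -> cV Y) (pD : cD X -> cD Y) (pF : cF X -> cF Y).
Hypothesis HX : forall x : cV X, link_iso X x (Kvv_V 3) (Kvv_E 3) Kvv_ends.
Hypothesis HY : forall y : cV Y, link_iso Y y C4_V C4_E C4_ends.
Hypothesis Hm : is_morph X Y pV pD pF.
Hypothesis HsD : forall e, exists d, pD d = e.
Hypothesis HiV : forall x x', pV x = pV x' <-> exists g, aV Ga g x = x'.
Hypothesis HiD : forall d d', pD d = pD d' <-> exists g, aD Ga g d = d'.
Hypothesis HiF : forall f f', pF f = pF f' <-> exists g, aF Ga g f = f'.
Hypothesis Hfin : forall f, finite_pred (fun g => aF Ga g f = f).

Let Hp0 : 0 < p. Proof. lia. Qed.
Let Hp1 : 1 < p. Proof. lia. Qed.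

Definition aYs (y : cV Y) := constructive_indefinite_description _ (HY y).
Definition aY (y : cV Y) : cD Y -> nat := proj1_sig (aYs y).
Definition bY (y : cV Y) : cF Y * nat -> nat :=
  proj1_sig (constructive_indefinite_description _ (proj2_sig (aYs y))).
Lemma bY_spec y :
  bij_on (fun d => src d = y) C4_V (aY y) /\
  bij_on (fun c => snd c < p /\ src (bd (fst c) (snd c)) = y) C4_E (bY y) /\
  (forall f i, i < p -> src (bd f i) = y -> ueq (pmap (aY y) (cp f i)) (C4_ends (bY y (f,i)))).
Proof. unfold bY. destruct (constructive_indefinite_description _ (proj2_sig (aYs y))) as [b Hb].
  simpl. destruct Hb as [H1 [H2 H3]]. split; [exact H1|split; [exact H2|]].
  intros f i Hi Hs. apply (link_ends Y y C4_V C4_E C4_ends (aY y) b H3); auto. Qed.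

Lemma cY_ex y c : exists hj, c < 4 -> snd hj < p /\ src (bd (fst hj) (snd hj)) = y /\ bY y hj = c.
Proof. destruct (bY_spec y) as [_ [[_ [_ Hs]] _]].
  destruct (lt_dec c 4) as [Hc|Hc].
  - destruct (Hs c Hc) as [hj [[H1 H1'] H2]]. exists hj; intros _; repeat split; auto.
  - destruct (Hs 0 ltac:(unfold C4_E; lia)) as [hj _]. exists hj; intros; lia. Qed.
Definition cY y c : cF Y * nat := proj1_sig (constructive_indefinite_description _ (cY_ex y c)).
Lemma cY_spec y c : c < 4 -> snd (cY y c) < p /\ src (bd (fst (cY y c)) (snd (cY y c))) = y /\ bY y (cY y c) = c.
Proof. unfold cY. destruct (constructive_indefinite_description _ (cY_ex y c)); simpl; auto. Qed.

Lemma cY_unique y h j : j < p -> src (bd h j) = y -> cY y (bY y (h,j)) = (h,j).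
Proof. intros Hj Hs. destruct (bY_spec y) as [_ [[Hb1 [Hb2 _]] _]].
  assert (Hc : bY y (h,j) < 4) by (apply (Hb1 (h,j)); simpl; auto).
  destruct (cY_spec y _ Hc) as [A1 [A2 A3]]. apply Hb2; simpl; auto. Qed.

Lemma corner_image f i : exists c, c < 4 /\
   ueq (cp (fst (cY (pV (src (bd f i))) c)) (snd (cY (pV (src (bd f i))) c))) (pmap pD (cp f i)) /\
   fst (cY (pV (src (bd f i))) c) = pF f /\
   ueq (pmap (aY (pV (src (bd f i)))) (pmap pD (cp f i))) (C4_ends c).
Proof.
  set (y := pV (src (bd f i))).
  destruct (morph_corner X Y pV pD pF Hp1 Hm f) as [s [k H]].
  pose proof (morph_ueq X Y pV pD pF f s k H) as H'.
  destruct (Rk_ex_j p s k i Hp0) as [j [Hj Hr]].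
  specialize (H' i j Hr).
  assert (Hs : src (bd (pF f) j) = y).
  { destruct Hm as [HV _]. unfold y. rewrite HV.
    destruct H' as [[E1 E2]|[E1 E2]]; unfold cp, pmap in *; simpl in *.
    - rewrite E2. auto.
    - rewrite E2, <- !HV. f_equal. apply (cp_src1 X f i Hp0). }
  destruct (bY_spec y) as [_ [[Hb1 _] Hends]].
  exists (bY y (pF f, j)). rewrite (cY_unique y _ _ Hj Hs). simpl.
  split; [apply (Hb1 (pF f, j)); simpl; auto|]. split; auto. split; auto.
  eapply ueq_trans; [apply ueq_pmap; apply ueq_sym; exact H'|]. apply Hends; auto.
Qed.

Lemma ueq_inj_on {T U} (P : T -> Prop) (h : T -> U) a b :
  (forall x y, P x -> P y -> h x = h y -> x = y) ->
  P (fst a) -> P (snd a) -> P (fst b) -> P (snd b) ->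
  ueq (pmap h a) (pmap h b) -> ueq a b.
Proof. intros Hi H1 H2 H3 H4. unfold ueq, pmap; simpl. intros [[]|[]]; [left|right]; split; auto. Qed.

Section VX.
Variable x : cV X.
Variables (alX : cD X -> bool * nat) (beX : cF X * nat -> nat * nat).
Hypothesis HalX : bij_on (fun d => src d = x) (Kvv_V 3) alX.
Hypothesis HbeX : bij_on (fun c => snd c < p /\ src (bd (fst c) (snd c)) = x) (Kvv_E 3) beX.
Hypothesis HenX : forall f i, i < p -> src (bd f i) = x -> ueq (pmap alX (cp f i)) (Kvv_ends (beX (f,i))).
Variables U W : nat -> cD X.
Hypothesis HU : forall a, a < 3 -> src (U a) = x /\ alX (U a) = (false,a).
Hypothesis HW : forall b, b < 3 -> src (W b) = x /\ alX (W b) = (true,b).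

Definition qa a := aY (pV x) (pD (U a)).
Definition qb b := aY (pV x) (pD (W b)).

Lemma cp_at f i : src (bd f i) = x -> src (fst (cp f i)) = x /\ src (snd (cp f i)) = x.
Proof. intros H. split; [rewrite cp_src1; auto|exact H]. Qed.

Lemma corner_UW f i : i < p -> src (bd f i) = x -> exists a b, a < 3 /\ b < 3 /\ beX (f,i) = (a,b) /\ ueq (cp f i) (U a, W b).
Proof. intros Hi Hs. destruct HbeX as [Hb1 _].
  assert (HE : Kvv_E 3 (beX (f,i))) by (apply (Hb1 (f,i)); simpl; auto).
  destruct (beX (f,i)) as [a b] eqn:Eb. unfold Kvv_E in HE; simpl in HE. exists a, b.
  split; [lia|split; [lia|split; auto]].
  destruct (HU a ltac:(lia)) as [Ua1 Ua2]. destruct (HW b ltac:(lia)) as [Wb1 Wb2].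
  destruct (cp_at f i Hs).
  apply (ueq_inj_on (fun d => src d = x) alX); auto.
  - destruct HalX as [_ [Hi2 _]]. auto.
  - pose proof (HenX f i Hi Hs) as Hh. rewrite Eb in Hh. unfold pmap at 2. simpl. rewrite Ua2, Wb2. exact Hh.
Qed.

Lemma UW_corner a b : a < 3 -> b < 3 -> exists f i, i < p /\ src (bd f i) = x /\ ueq (cp f i) (U a, W b).
Proof. intros Ha Hb. destruct HbeX as [_ [_ Hb3]].
  destruct (Hb3 (a,b) ltac:(unfold Kvv_E; simpl; lia)) as [[f i] [[Hi Hs] Eb]]. simpl in *.
  exists f, i. split; auto. split; auto.
  destruct (corner_UW f i Hi Hs) as [a' [b' [_ [_ [Eb' Hu]]]]]. rewrite Eb in Eb'.
  injection Eb'; intros; subst; auto. Qed.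

Lemma UW_inj a b a' b' : a < 3 -> b < 3 -> a' < 3 -> b' < 3 -> ueq (U a, W b) (U a', W b') -> a = a' /\ b = b'.
Proof. intros Ha Hb Ha' Hb' [[E1 E2]|[E1 E2]]; simpl in *.
  - apply (f_equal alX) in E1, E2. rewrite (proj2 (HU a Ha)), (proj2 (HU a' Ha')) in E1.
    rewrite (proj2 (HW b Hb)), (proj2 (HW b' Hb')) in E2. injection E1; injection E2; auto.
  - apply (f_equal alX) in E1. rewrite (proj2 (HU a Ha)), (proj2 (HW b' Hb')) in E1. discriminate.
Qed.

Lemma adjq a b : a < 3 -> b < 3 -> exists c, c < 4 /\ match4 (qa a) (qb b) c = true.
Proof. intros Ha Hb. destruct (UW_corner a b Ha Hb) as [f [i [Hi [Hs Hu]]]].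
  destruct (corner_image f i) as [c [Hc [_ [_ Hq]]]]. rewrite Hs in Hq.
  exists c. split; auto. apply match4_ueq. eapply ueq_trans; [|exact Hq].
  unfold qa, qb. change (aY (pV x) (pD (U a)), aY (pV x) (pD (W b))) with (pmap (aY (pV x)) (pmap pD (U a, W b))).
  apply ueq_pmap, ueq_pmap, ueq_sym; auto. Qed.

Lemma coverq t : t < 4 -> (exists a, a < 3 /\ qa a = t) \/ (exists b, b < 3 /\ qb b = t).
Proof. intros Ht. destruct (bY_spec (pV x)) as [[_ [_ Ha3]] _].
  destruct (Ha3 t ltac:(unfold C4_V; lia)) as [e [He Et]].
  destruct (HsD e) as [d Ed].
  assert (Hsd : pV (src d) = pV x).
  { destruct Hm as [HV _]. rewrite HV, Ed. auto. }
  apply HiV in Hsd. destruct Hsd as [g Hg].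
  set (d' := aD Ga g d).
  assert (Hs' : src d' = x) by (unfold d'; destruct (a_morph Ga g) as [HV _]; rewrite <- HV; auto).
  assert (Ed' : pD d' = e) by (unfold d'; rewrite <- Ed; symmetry; apply HiD; eauto).
  destruct HalX as [Ha1 [Ha2 _]]. pose proof (Ha1 d' Hs') as Hk. unfold Kvv_V in Hk.
  destruct (alX d') as [bb n] eqn:Ea. simpl in Hk. destruct bb.
  - right. exists n. split; auto. destruct (HW n Hk) as [W1 W2].
    assert (W n = d') by (apply Ha2; auto; rewrite W2; auto). unfold qb. rewrite H, Ed'. auto.
  - left. exists n. split; auto. destruct (HU n Hk) as [U1 U2].
    assert (U n = d') by (apply Ha2; auto; rewrite U2; auto). unfold qa. rewrite H, Ed'. auto.
Qed.

Let pDci := pD_corner_inj p Hp5 X Y pV pD pF HY Hm.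
Let sfc := stab_fix_cp p Hp5 X Y Ga pV pD pF HY Hm HiD.
Let sfv := stab_face_vertex p Hp5 X Y Ga pV pD pF HY Hm HiD.

Definition act (g : G Ga) (e e' : nat * nat) : Prop :=
  fst e' < 3 /\ snd e' < 3 /\ ueq (pmap (aD Ga g) (U (fst e), W (snd e))) (U (fst e'), W (snd e')).

Lemma pDinv g d : pD (aD Ga g d) = pD d.
Proof. symmetry. apply HiD. eauto. Qed.

Lemma ueq_P {T} (P : T -> Prop) a b : ueq a b -> P (fst b) -> P (snd b) -> P (fst a) /\ P (snd a).
Proof. intros [[E1 E2]|[E1 E2]] H1 H2; rewrite E1, E2; auto. Qed.

Lemma morph_g g f i : exists j, j < p /\ ueq (cp (aF Ga g f) j) (pmap (aD Ga g) (cp f i)).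
Proof. destruct (morph_corner X X _ _ _ Hp1 (a_morph Ga g) f) as [s [k H]].
  pose proof (morph_ueq X X (aV Ga g) (aD Ga g) (aF Ga g) f s k H) as H'.
  destruct (Rk_ex_j p s k i Hp0) as [j [Hj Hr]]. exists j; auto. Qed.

Lemma src_g g d : src (aD Ga g d) = aV Ga g (src d).
Proof. destruct (a_morph Ga g) as [HV _]. auto. Qed.

Lemma act_to g a b : aV Ga g x = x -> a < 3 -> b < 3 -> exists e', act g (a,b) e'.
Proof. intros Hg Ha Hb. destruct (UW_corner a b Ha Hb) as [f [i [Hi [Hs Hu]]]].
  destruct (morph_g g f i) as [j [Hj H]].
  assert (Hs' : src (bd (aF Ga g f) j) = x).
  { assert (Hc : ueq (cp (aF Ga g f) j) (pmap (aD Ga g) (U a, W b))).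
    { eapply ueq_trans; [exact H|]. apply ueq_pmap; auto. }
    destruct (ueq_P (fun d => src d = x) _ _ Hc) as [_ Hx]; simpl.
    - rewrite src_g, (proj1 (HU a Ha)); auto.
    - rewrite src_g, (proj1 (HW b Hb)); auto.
    - exact Hx. }
  destruct (corner_UW _ _ Hj Hs') as [a' [b' [Ha' [Hb' [_ Hu']]]]].
  exists (a',b'). unfold act; simpl. split; auto. split; auto.
  eapply ueq_trans; [|exact Hu']. eapply ueq_trans; [|apply ueq_sym; exact H].
  apply ueq_pmap, ueq_sym; auto.
Qed.

Lemma act_q g e e' : act g e e' -> ueq (qa (fst e), qb (snd e)) (qa (fst e'), qb (snd e')).
Proof. intros [_ [_ H]]. unfold qa, qb.
  apply (ueq_pmap (fun d => aY (pV x) (pD d))) in H. unfold pmap in H; simpl in H.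
  rewrite !pDinv in H. exact H. Qed.

Lemma corner_c f i a b c : i < p -> src (bd f i) = x -> ueq (cp f i) (U a, W b) -> c < 4 ->
  match4 (qa a) (qb b) c = true ->
  fst (cY (pV x) c) = pF f /\ ueq (cp (fst (cY (pV x) c)) (snd (cY (pV x) c))) (pmap pD (cp f i)).
Proof. intros Hi Hs Hu Hc Hm4. destruct (corner_image f i) as [c1 [Hc1 [H1 [H2 H3]]]].
  rewrite Hs in *. assert (c1 = c).
  { apply C4_ends_inj; auto. eapply ueq_trans; [apply ueq_sym; exact H3|].
    eapply ueq_trans; [|apply match4_ueq; exact Hm4]. unfold qa, qb.
    change (aY (pV x) (pD (U a)), aY (pV x) (pD (W b))) with (pmap (aY (pV x)) (pmap pD (U a, W b))).
    apply ueq_pmap, ueq_pmap; auto. }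
  subst. auto. Qed.

Lemma act_from a b a' b' c : a < 3 -> b < 3 -> a' < 3 -> b' < 3 -> c < 4 ->
  match4 (qa a) (qb b) c = true -> match4 (qa a') (qb b') c = true ->
  exists g, aV Ga g x = x /\ act g (a,b) (a',b').
Proof. intros Ha Hb Ha' Hb' Hc M1 M2.
  destruct (UW_corner a b Ha Hb) as [f [i [Hi [Hs Hu]]]].
  destruct (UW_corner a' b' Ha' Hb') as [f' [i' [Hi' [Hs' Hu']]]].
  destruct (corner_c f i a b c Hi Hs Hu Hc M1) as [F1 G1].
  destruct (corner_c f' i' a' b' c Hi' Hs' Hu' Hc M2) as [F2 G2].
  assert (Hff : pF f = pF f') by congruence.
  apply HiF in Hff. destruct Hff as [g Hg].
  destruct (morph_g g f i) as [j [Hj H]]. rewrite Hg in H.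
  assert (Hmj : modeq p j i').
  { apply (pDci f'). eapply ueq_trans; [apply ueq_pmap; exact H|].
    replace (pmap pD (pmap (aD Ga g) (cp f i))) with (pmap pD (cp f i))
      by (unfold pmap; simpl; rewrite !pDinv; auto).
    eapply ueq_trans; [apply ueq_sym; exact G1|]. exact G2. }
  rewrite (cp_cong X f' j i' Hmj) in H.
  assert (Hact : ueq (pmap (aD Ga g) (U a, W b)) (U a', W b')).
  { eapply ueq_trans; [|exact Hu']. eapply ueq_trans; [|apply ueq_sym; exact H].
    apply ueq_pmap, ueq_sym; auto. }
  exists g. split.
  - destruct (ueq_P (fun d => src d = x) _ _ Hact) as [Hx _]; simpl.
    + apply (HU a' Ha'). + apply (HW b' Hb').
    + simpl in Hx. rewrite src_g, (proj1 (HU a Ha)) in Hx. auto.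
  - unfold act; simpl; auto.
Qed.

Lemma act_stab f i a b g : i < p -> src (bd f i) = x -> ueq (cp f i) (U a, W b) ->
  aV Ga g x = x -> act g (a,b) (a,b) -> aF Ga g f = f.
Proof. intros Hi Hs Hu Hg [_ [_ Ha]]. simpl in Ha.
  destruct (morph_g g f i) as [j [Hj H]].
  assert (Hc : ueq (cp (aF Ga g f) j) (cp f i)).
  { eapply ueq_trans; [exact H|]. eapply ueq_trans; [apply ueq_pmap; exact Hu|].
    eapply ueq_trans; [exact Ha|]. apply ueq_sym; auto. }
  assert (Hs' : src (bd (aF Ga g f) j) = x).
  { destruct (ueq_P (fun d => src d = x) _ _ Hc) as [_ Hx]; auto.
    rewrite (cp_src1 X f i Hp0); auto. }
  destruct (Xcorner_eq X 3 x Hp0 (HX x) _ _ _ _ Hj Hi Hs' Hc) as [E _]. exact E.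
Qed.

Lemma stab_act f i a b h : ueq (cp f i) (U a, W b) -> a < 3 -> b < 3 -> aF Ga h f = f ->
  pmap (aD Ga h) (U a, W b) = (U a, W b).
Proof. intros Hu Ha Hb Hh. pose proof (sfc h f i Hh) as E. unfold pmap in *; simpl in *.
  destruct Hu as [[E1 E2]|[E1 E2]]; simpl in *; rewrite <- E1, <- E2;
  injection E; intros E3 E4; rewrite E3, E4; auto. Qed.

Lemma pmap_comp {T} (h k : T -> T) a : pmap h (pmap k a) = pmap (fun d => h (k d)) a.
Proof. reflexivity. Qed.

Lemma vertex_count N (m : cF Y -> nat) :
  (forall f n, cardP (fun g => aF Ga g f = f) n -> m (pF f) = n) ->
  cardP (fun g => aV Ga g x = x) N ->
  forall m0, length (filter (fun c => m (fst (cY (pV x) c)) =? m0) (seq 0 4)) =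
    Nat.b2n (N =? m0) + 2 * Nat.b2n (N =? 2 * m0) + Nat.b2n (N =? 4 * m0).
Proof.
  intros Hmdef HN m0.
  destruct (local_comb qa qb adjq coverq) as [V1 [V2 [V4 Ho]]].
  assert (Hmc : forall c, c < 4 -> N = ocnt qa qb c * m (fst (cY (pV x) c))).
  { intros c Hc.
    set (O := filter (fun ab => match4 (qa (fst ab)) (qb (snd ab)) c) E9).
    assert (HO : length O = ocnt qa qb c) by reflexivity.
    assert (Hne : exists ab, In ab O).
    { destruct O as [|ab O'] eqn:EO; [|exists ab; simpl; auto].
      simpl in HO. destruct (Ho c Hc) as [H|[H|H]]; lia. }
    destruct Hne as [[a b] Hab]. unfold O in Hab. apply filter_In in Hab.
    destruct Hab as [Hab Mab]. apply in_E9 in Hab. destruct Hab as [Ha Hb]. simpl in Mab.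
    destruct (UW_corner a b Ha Hb) as [f [i [Hi [Hs Hu]]]].
    destruct (corner_c f i a b c Hi Hs Hu Hc Mab) as [Ef _].
    destruct (cardP_exists _ (Hfin f)) as [n Hn].
    rewrite Ef, (Hmdef f n Hn), <- HO.
    apply (orbit_stab Ga (fun g => aV Ga g x = x) (fun g => aF Ga g f = f) act (a,b) O N n).
    - apply NoDup_filter, E9_NoDup.
    - intros g [a1 b1] [a2 b2] Hg [A1 [B1 H1]] [A2 [B2 H2]]. simpl in *.
      destruct (UW_inj a1 b1 a2 b2 A1 B1 A2 B2) as [-> ->]; auto.
      eapply ueq_trans; [apply ueq_sym; exact H1|exact H2].
    - intros g Hg. destruct (act_to g a b Hg Ha Hb) as [[a' b'] He']. exists (a',b').
      split; auto. unfold O. apply filter_In. pose proof He' as He''. destruct He'' as [A' [B' _]]. simpl in A', B'.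
      split; [apply in_E9; auto|]. simpl. apply match4_ueq. apply match4_ueq in Mab.
      eapply ueq_trans; [|exact Mab]. apply ueq_sym. exact (act_q g (a,b) (a',b') He').
    - intros [a' b'] He'. unfold O in He'. apply filter_In in He'. destruct He' as [He' M'].
      apply in_E9 in He'. destruct He' as [Ha' Hb']. simpl in M'.
      destruct (act_from a b a' b' c Ha Hb Ha' Hb' Hc Mab M') as [g [Hg Hact]]. eauto.
    - intros g h Hg Hh. rewrite aVM, Hh, Hg. auto.
    - intros g e' h Hg [A1 [B1 H1]] Hh. split; auto. split; auto. simpl in *.
      replace (pmap (aD Ga (gmul Ga g h)) (U a, W b)) with (pmap (aD Ga g) (pmap (aD Ga h) (U a, W b))).
      + rewrite (stab_act f i a b h Hu Ha Hb Hh). auto.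
      + unfold pmap; simpl. rewrite !aDM. auto.
    - intros g g' e' Hg Hg' [A1 [B1 H1]] [A2 [B2 H2]].
      apply (act_stab f i a b); auto.
      + rewrite aVM, Hg. rewrite <- Hg' at 1. apply aV_inv.
      + split; auto. split; auto. simpl in *.
        replace (pmap (aD Ga (gmul Ga (ginv Ga g') g)) (U a, W b)) with
           (pmap (aD Ga (ginv Ga g')) (pmap (aD Ga g) (U a, W b)))
          by (unfold pmap; simpl; rewrite !aDM; auto).
        replace (U a, W b) with (pmap (aD Ga (ginv Ga g')) (pmap (aD Ga g') (U a, W b))) at 2
          by (unfold pmap; simpl; rewrite !aD_inv; auto).
        apply ueq_pmap. eapply ueq_trans; [exact H1|apply ueq_sym; exact H2].
    - intros h Hh. rewrite <- Hs. apply sfv; auto.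
    - exact HN.
    - exact Hn. }
  rewrite <- (sum4 (ocnt qa qb) N m0 Ho V1 V2 V4).
  f_equal. apply filter_ext_in. intros c Hc. apply in_seq in Hc.
  rewrite (Hmc c ltac:(lia)).
  assert (Hpos : 0 < ocnt qa qb c) by (destruct (Ho c ltac:(lia)) as [H|[H|H]]; lia).
  destruct (Nat.eqb_spec (m (fst (cY (pV x) c))) m0) as [E|E];
  destruct (Nat.eqb_spec (ocnt qa qb c * m (fst (cY (pV x) c))) (ocnt qa qb c * m0)) as [E'|E']; auto.
  - exfalso; apply E'; rewrite E; auto.
  - exfalso; apply E. apply Nat.mul_cancel_l in E'; lia.
Qed.

End VX.

Lemma dY_ex y c : exists d, c < 4 -> src d = y /\ aY y d = c.
Proof. destruct (bY_spec y) as [[_ [_ Hs]] _].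
  destruct (lt_dec c 4) as [Hc|Hc].
  - destruct (Hs c Hc) as [d [H1 H2]]. exists d; auto.
  - destruct (Hs 0 ltac:(unfold C4_V; lia)) as [d _]. exists d; intros; lia. Qed.
Definition dY y c : cD Y := proj1_sig (constructive_indefinite_description _ (dY_ex y c)).
Lemma dY_spec y c : c < 4 -> src (dY y c) = y /\ aY y (dY y c) = c.
Proof. unfold dY. destruct (constructive_indefinite_description _ (dY_ex y c)); simpl; auto. Qed.

Lemma len_filter_map {A B} (f : B -> bool) (g : A -> B) l :
  length (filter f (map g l)) = length (filter (fun a => f (g a)) l).
Proof. induction l; simpl; auto. destruct (f (g a)); simpl; auto. Qed.

Lemma count_darts (lV : list (cV Y)) (lD : list (cD Y)) :
  NoDup lV -> (forall y, In y lV) -> NoDup lD -> (forall d, In d lD) ->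
  length lD = 4 * length lV.
Proof.
  intros HnV HaV HnD HaD.
  set (L := flat_map (fun y => map (dY y) (seq 0 4)) lV).
  assert (HL : length L = length lV * 4).
  { unfold L. rewrite length_flat_map_const. rewrite length_seq. auto. }
  rewrite (nodup_same_len lD L); [lia|auto| |].
  - unfold L. apply NoDup_flat_map_gen; auto.
    + intros y _. apply NoDup_map_inj; [|apply seq_NoDup]. intros c c' Hc Hc' E.
      apply in_seq in Hc, Hc'. rewrite <- (proj2 (dY_spec y c ltac:(lia))), <- (proj2 (dY_spec y c' ltac:(lia))), E. auto.
    + intros y y' z _ _ Hz Hz'. apply in_map_iff in Hz, Hz'.
      destruct Hz as [c [<- Hc]]. destruct Hz' as [c' [E Hc']]. apply in_seq in Hc, Hc'.
      rewrite <- (proj1 (dY_spec y c ltac:(lia))), <- (proj1 (dY_spec y' c' ltac:(lia))), E. auto.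
  - intros d. split; intros _; [|auto]. unfold L. apply in_flat_map. exists (src d). split; auto.
    apply in_map_iff. destruct (bY_spec (src d)) as [[Ha1 [Ha2 _]] _].
    assert (Hc : aY (src d) d < 4) by (apply (Ha1 d); auto).
    exists (aY (src d) d). split; [|apply in_seq; lia].
    destruct (dY_spec (src d) _ Hc) as [E1 E2]. apply Ha2; auto.
Qed.

Lemma count_corners (lV : list (cV Y)) (lF : list (cF Y)) (P : cF Y -> bool) :
  NoDup lV -> (forall y, In y lV) -> NoDup lF -> (forall h, In h lF) ->
  list_sum (map (fun y => length (filter (fun c => P (fst (cY y c))) (seq 0 4))) lV) =
  p * length (filter P lF).
Proof.
  intros HnV HaV HnF HaF.
  set (L1 := flat_map (fun y => map (cY y) (seq 0 4)) lV).
  set (L2 := flat_map (fun h => map (fun j => (h,j)) (seq 0 p)) lF).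
  set (Q := fun hj : cF Y * nat => P (fst hj)).
  assert (E1 : length (filter Q L1) = list_sum (map (fun y => length (filter (fun c => P (fst (cY y c))) (seq 0 4))) lV)).
  { unfold L1. rewrite len_filter_flat_map. apply list_sum_map_ext. intros y _. rewrite len_filter_map. reflexivity. }
  assert (E2 : length (filter Q L2) = p * length (filter P lF)).
  { unfold L2. rewrite len_filter_flat_map. clear -lF. induction lF as [|h l IH]; simpl; [lia|].
    rewrite IH, len_filter_map. unfold Q; simpl. destruct (P h); simpl.
    - rewrite filter_true, length_seq. lia.
    - rewrite filter_false. simpl. lia. }
  rewrite <- E1, <- E2. apply nodup_same_len; try apply NoDup_filter.
  - unfold L1. apply NoDup_flat_map_gen; auto.
    + intros y _. apply NoDup_map_inj; [|apply seq_NoDup]. intros c c' Hc Hc' E.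
      apply in_seq in Hc, Hc'. rewrite <- (proj2 (proj2 (cY_spec y c ltac:(lia)))),
        <- (proj2 (proj2 (cY_spec y c' ltac:(lia)))), E. auto.
    + intros y y' z _ _ Hz Hz'. apply in_map_iff in Hz, Hz'.
      destruct Hz as [c [<- Hc]]. destruct Hz' as [c' [E Hc']]. apply in_seq in Hc, Hc'.
      rewrite <- (proj1 (proj2 (cY_spec y c ltac:(lia)))), <- (proj1 (proj2 (cY_spec y' c' ltac:(lia)))), E. auto.
  - unfold L2. apply NoDup_flat_map_gen; auto.
    + intros h _. apply NoDup_map_inj; [|apply seq_NoDup]. intros j j' _ _ E. injection E; auto.
    + intros h h' z _ _ Hz Hz'. apply in_map_iff in Hz, Hz'.
      destruct Hz as [j [<- _]]. destruct Hz' as [j' [E _]]. injection E; auto.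
  - intros [h j]. rewrite !filter_In. split; intros [Hin HQ]; split; auto.
    + unfold L1 in Hin. apply in_flat_map in Hin. destruct Hin as [y [_ Hin]].
      apply in_map_iff in Hin. destruct Hin as [c [E Hc]]. apply in_seq in Hc.
      destruct (cY_spec y c ltac:(lia)) as [S1 _]. rewrite E in S1. simpl in S1.
      unfold L2. apply in_flat_map. exists h. split; auto. apply in_map_iff. exists j. split; auto.
      apply in_seq; lia.
    + unfold L2 in Hin. apply in_flat_map in Hin. destruct Hin as [h' [_ Hin]].
      apply in_map_iff in Hin. destruct Hin as [j' [E Hj]]. injection E; intros; subst. apply in_seq in Hj.
      unfold L1. apply in_flat_map. exists (src (bd h j)). split; auto. apply in_map_iff.
      destruct (bY_spec (src (bd h j))) as [_ [[Hb1 _] _]].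
      exists (bY (src (bd h j)) (h,j)). split.
      * apply cY_unique; auto; lia.
      * apply in_seq. assert (bY (src (bd h j)) (h, j) < 4) by (apply (Hb1 (h,j)); simpl; split; auto; lia). lia.
Qed.

Lemma vertex_count2 x N (m : cF Y -> nat) :
  (forall f n, cardP (fun g => aF Ga g f = f) n -> m (pF f) = n) ->
  cardP (fun g => aV Ga g x = x) N ->
  forall m0, length (filter (fun c => m (fst (cY (pV x) c)) =? m0) (seq 0 4)) =
    Nat.b2n (N =? m0) + 2 * Nat.b2n (N =? 2 * m0) + Nat.b2n (N =? 4 * m0).
Proof.
  intros Hmdef HN m0. destruct (HX x) as [alX [beX [Ha [Hb He]]]].
  pose proof (link_ends X x (Kvv_V 3) (Kvv_E 3) Kvv_ends alX beX He) as HenX.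
  destruct Ha as [Ha1 [Ha2 Ha3]].
  assert (Hex : forall (bb : bool) a, exists d, a < 3 -> src d = x /\ alX d = (bb,a)).
  { intros bb a. destruct (lt_dec a 3) as [Hl|Hl].
    - destruct (Ha3 (bb,a) ltac:(unfold Kvv_V; simpl; lia)) as [d [H1 H2]]. exists d; auto.
    - destruct (Ha3 (bb,0) ltac:(unfold Kvv_V; simpl; lia)) as [d _]. exists d; intros; lia. }
  set (U := fun a => proj1_sig (constructive_indefinite_description _ (Hex false a))).
  set (W := fun a => proj1_sig (constructive_indefinite_description _ (Hex true a))).
  assert (HU : forall a, a < 3 -> src (U a) = x /\ alX (U a) = (false,a)).
  { intros a Hl. unfold U. destruct (constructive_indefinite_description _ (Hex false a)); simpl; auto. }
  assert (HW : forall a, a < 3 -> src (W a) = x /\ alX (W a) = (true,a)).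
  { intros a Hl. unfold W. destruct (constructive_indefinite_description _ (Hex true a)); simpl; auto. }
  eapply vertex_count; eauto. split; auto.
Qed.

Lemma Y_divisible (lV : list (cV Y)) (lF : list (cF Y)) :
  (forall x, finite_pred (fun g => aV Ga g x = x)) ->
  (forall y, exists x, pV x = y) -> (forall h, exists f, pF f = h) ->
  NoDup lV -> (forall y, In y lV) -> NoDup lF -> (forall h, In h lF) ->
  Nat.divide p (length lV).
Proof.
  intros Hfx HsV HsF HnV HaV HnF HaF.
  set (xl := fun y => proj1_sig (constructive_indefinite_description _ (HsV y))).
  assert (Hxl : forall y, pV (xl y) = y).
  { intros y. unfold xl. destruct (constructive_indefinite_description _ (HsV y)); auto. }
  set (Nx := fun y => proj1_sig (constructive_indefinite_description _ (cardP_exists _ (Hfx (xl y))))).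
  assert (HNx : forall y, cardP (fun g => aV Ga g (xl y) = xl y) (Nx y)).
  { intros y. unfold Nx. destruct (constructive_indefinite_description _ (cardP_exists _ (Hfx (xl y)))); auto. }
  set (fl := fun h => proj1_sig (constructive_indefinite_description _ (HsF h))).
  assert (Hfl : forall h, pF (fl h) = h).
  { intros h. unfold fl. destruct (constructive_indefinite_description _ (HsF h)); auto. }
  set (mF := fun h => proj1_sig (constructive_indefinite_description _ (cardP_exists _ (Hfin (fl h))))).
  assert (HmF : forall h, cardP (fun g => aF Ga g (fl h) = fl h) (mF h)).
  { intros h. unfold mF. destruct (constructive_indefinite_description _ (cardP_exists _ (Hfin (fl h)))); auto. }
  assert (Hmdef : forall f n, cardP (fun g => aF Ga g f = f) n -> mF (pF f) = n).
  { intros f n Hn. assert (E : pF (fl (pF f)) = pF f) by apply Hfl.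
    apply HiF in E. destruct E as [g Hg].
    eapply cardP_unique; [|exact Hn]. eapply conj_card; [apply HmF|exact Hg]. }
  apply (nt_div p lV Nx (fun k => length (filter (fun h => mF h =? k) lF)) Hp0).
  - intros y _. eapply cardP_pos; [apply HNx|]. apply aV1.
  - intros k _. rewrite <- (count_corners lV lF (fun h => mF h =? k) HnV HaV HnF HaF).
    rewrite (list_sum_map_ext _ (fun y => Nat.b2n (Nx y =? k) + 2 * Nat.b2n (Nx y =? 2 * k) + Nat.b2n (Nx y =? 4 * k))).
    + unfold Vm. rewrite !list_sum_map_add, list_sum_map_mul. auto.
    + intros y _. rewrite <- (vertex_count2 (xl y) (Nx y) mF Hmdef (HNx y) k). rewrite Hxl. auto.
Qed.

End Local.

Lemma part1 (p g F : nat) (hp : 5 <= p) (hg : 2 <= g)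
    (hF : F * (p - 4) = 8 * (g - 1)) (hF4 : ~ Nat.divide 4 F) :
  ~ lattice_exists p 3 g.
Proof.
  intros [X [[_ HX] [Ga [Hul [Y [[nF Htess] [pV [pD [pF [Hm [HsV [HsD [HsF [HiV [HiD HiF]]]]]]]]]]]]]]].
  destruct Hul as [_ [_ [_ [Hfx [_ Hff]]]]].
  destruct Htess as [_ [HY [_ [[lF [HnF [HaF HlF]]] [nV [nD [[lV [HnV [HaV HlV]]] [[lD [HnD [HaD HlD]]] Heu]]]]]]]].
  pose proof (Y_divisible p hp X Y Ga pV pD pF HX HY Hm HsD HiV HiD HiF Hff lV lF Hfx HsV HsF HnV HaV HnF HaF) as Hdiv.
  pose proof (count_darts p hp Y HY lV lD HnV HaV HnD HaD) as Hd.
  pose proof (count_corners p hp Y HY lV lF (fun _ => true) HnV HaV HnF HaF) as Hc.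
  rewrite (list_sum_map_ext _ (fun _ => 4)) in Hc by (intros; rewrite filter_true; apply length_seq).
  rewrite list_sum_const, filter_true in Hc.
  destruct Hdiv as [w Hw]. subst.
  apply hF4. exists w.
  assert (H1 : length lF = 4 * w) by nia.
  assert (H2 : length lF + 2 * g = w * p + 2) by nia.
  assert (H3 : (length lF) * (p - 4) = F * (p - 4)) by nia.
  apply Nat.mul_cancel_r in H3; lia.
Qed.


Theorem proposition5p4 (p g F : nat) (hp : 5 <= p) (hg : 2 <= g)
    (hF : F * (p - 4) = 8 * (g - 1)) (hFpos : 0 < F) (hF4 : ~ Nat.divide 4 F) :
  ~ lattice_exists p 3 g /\
  ~ (exists Y : cx p, tessellation p g F Y /\
       forall v, 3 <= v -> Nat.Odd v ->
         exists X : cx p, bourdon p v X /\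
         exists Ga : action X, uniform_lattice Ga /\ quotient_iso Ga Y).
Proof.
  split.
  - exact (part1 p g F hp hg hF hF4).
  - intros [Y [Ht Hall]]. apply (part1 p g F hp hg hF hF4).
    destruct (Hall 3 (le_n 3) ltac:(exists 1; reflexivity)) as [X [HXb [Ga [Hul Hq]]]].
    exists X. split; auto. exists Ga. split; auto. exists Y. split; auto. exists F; auto.
Qed.
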